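(* Let $E$ be a finite set, $\omega:2^E\to[0,\infty)$, and suppose $Z=Z(\omega;\mathbf{y})$ is Rayleigh. Let $e,f,g\in E$ be distinct. Then for all $\mathbf{y}$ with all $y_c>0$, $$\Theta Z\{e,f|g\}\ge -2\sqrt{\Delta Z^g\{e,f\}\,\Delta Z_g\{e,f\}},$$ where $\Theta Z\{e,f|g\}=Z_e^{fg}Z_{fg}^e+Z_f^{eg}Z_{eg}^f-Z_g^{ef}Z_{ef}^g-Z_{efg}Z^{efg}$.
   Context: $Z(\omega;\mathbf{y})=\sum_{S\subseteq E}\omega(S)\prod_{e\in S}y_e$ with $\omega$ not identically zero. For a multiaffine polynomial $Z$, superscripts denote setting the indicated variables to $0$ and subscripts denote partial differentiation in the indicated variables, e.g. $Z_e^{fg}=(\partial Z/\partial y_e)|_{y_f=y_g=0}$. $\Delta Z\{e,f\}=Z_eZ_f-Z_{ef}Z$; $\Delta Z^g\{e,f\}$ and $\Delta Z_g\{e,f\}$ denote this quantity computed for the polynomials $Z^g$ and $Z_g$ respectively. $Z$ is Rayleigh if $\Delta Z\{e,f\}(\mathbf{y})\ge0$ for all distinct $e,f$ and all $\mathbf{y}>0$ coordinatewise. *)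

(* Defs.v *)
From mathcomp Require Import all_boot all_order all_algebra.
Set Implicit Arguments. Unset Strict Implicit. Unset Printing Implicit Defensive.
Import Order.TTheory GRing.Theory Num.Theory.
Local Open Scope ring_scope.

(* A multiaffine polynomial over ground set E (a finType) with coefficients
   in R is represented by its coefficient function  w : {set E} -> R,
   i.e. by  Z(w; y) = \sum_S w(S) \prod_{e in S} y_e . *)
Section Multiaffine.
Variables (R : rcfType) (E : finType).

Definition Zeval (w : {set E} -> R) (y : E -> R) : R :=
  \sum_(S : {set E}) w S * \prod_(i in S) y i.

(* coefficients of  dZ/dy_e  (exact formula for a multiaffine polynomial):
   the coefficient of the monomial y^S (e notin S) is w(S + e). *)
Definition mderiv (e : E) (w : {set E} -> R) : {set E} -> R :=
  fun S => if e \in S then 0 else w (e |: S).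

(* coefficients of  Z|_{y_e = 0} : drop monomials containing y_e. *)
Definition msetz (e : E) (w : {set E} -> R) : {set E} -> R :=
  fun S => if e \in S then 0 else w S.

Definition DeltaZ (w : {set E} -> R) (e f : E) (y : E -> R) : R :=
  Zeval (mderiv e w) y * Zeval (mderiv f w) y
  - Zeval (mderiv e (mderiv f w)) y * Zeval w y.

Definition Rayleigh (w : {set E} -> R) : Prop :=
  forall (e f : E) (y : E -> R), e != f -> (forall c, 0 < y c) ->
    0 <= DeltaZ w e f y.

Definition ThetaZ (w : {set E} -> R) (e f g : E) (y : E -> R) : R :=
    Zeval (mderiv e (msetz f (msetz g w))) y
      * Zeval (mderiv f (mderiv g (msetz e w))) y
  + Zeval (mderiv f (msetz e (msetz g w))) y
      * Zeval (mderiv e (mderiv g (msetz f w))) y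
  - Zeval (mderiv g (msetz e (msetz f w))) y
      * Zeval (mderiv e (mderiv f (msetz g w))) y
  - Zeval (mderiv e (mderiv f (mderiv g w))) y
      * Zeval (msetz e (msetz f (msetz g w))) y.

End Multiaffine.

(* Main.v *)
Require Import Defs.
From mathcomp Require Import all_boot all_order all_algebra.
From mathcomp Require Import ring lra.
Set Implicit Arguments. Unset Strict Implicit.
Import Order.TTheory GRing.Theory Num.Theory.
Local Open Scope ring_scope.

Lemma eq_Zeval (R : rcfType) (E : finType) (w1 w2 : {set E} -> R) y :
  (forall S, w1 S = w2 S) -> Zeval w1 y = Zeval w2 y.
Proof. by move=> h; rewrite /Zeval; apply: eq_bigr => S _; rewrite h. Qed.

Lemma Zeval0 (R : rcfType) (E : finType) (y : E -> R) :
  Zeval (fun _ => 0) y = 0.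
Proof. by rewrite /Zeval big1 // => S _; rewrite mul0r. Qed.

Lemma Zeval_dec (R : rcfType) (E : finType) (w : {set E} -> R) y c :
  Zeval w y = Zeval (msetz c w) y + y c * Zeval (mderiv c w) y.
Proof.
rewrite /Zeval (bigID (fun S : {set E} => c \in S)) /= addrC.
have -> : \sum_(S : {set E} | c \notin S) w S * \prod_(i in S) y i
          = \sum_(S : {set E}) msetz c w S * \prod_(i in S) y i.
  rewrite [RHS](bigID (fun S : {set E} => c \in S)) /= [in RHS]big1 ?add0r; last first.
    by move=> S hS; rewrite /msetz hS mul0r.
  by apply: eq_bigr => S hS; rewrite /msetz (negbTE hS).
congr (_ + _).
rewrite mulr_sumr [RHS](bigID (fun S : {set E} => c \in S)) /= [in RHS]big1 ?add0r; last first.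
  by move=> S hS; rewrite /mderiv hS mul0r mulr0.
pose h := fun S : {set E} => if c \in S then S :\ c else c |: S.
have hK : involutive h.
  move=> S; rewrite /h; case hS: (c \in S).
    by rewrite setD11 setD1K.
  by rewrite setU11 setU1K ?hS.
rewrite (reindex_inj (inv_inj hK)) /=.
apply: eq_big => S.
  by rewrite /h; case: ifP => hS; rewrite ?in_setD1 ?eqxx ?setU11.
move=> hS0; have hS : c \notin S.
  by move: hS0; rewrite /h; case: ifP => // _; rewrite setD11.
rewrite /h (negbTE hS) /mderiv (negbTE hS) big_setU1 //=.
by rewrite mulrCA.
Qed.

Definition Tset (E : finType) (e f g : E) (a b c : bool) : {set E} :=
  [set x | ((x == e) && a) || ((x == f) && b) || ((x == g) && c)].

Definition Bc (R : rcfType) (E : finType) (e f g : E) (a b c : bool)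
  (v : {set E} -> R) : {set E} -> R :=
  fun S => if (e \notin S) && (f \notin S) && (g \notin S)
           then v (Tset e f g a b c :|: S) else 0.

Definition Zb (R : rcfType) (E : finType) (e f g : E) (a b c : bool)
  (v : {set E} -> R) (y : E -> R) : R := Zeval (Bc e f g a b c v) y.

Ltac crush e f g Hs :=
  let S := fresh "S" in let x := fresh "x" in
  move=> S; rewrite /Bc /mderiv /msetz /Tset ?inE ?eqxx ?Hs /=;
  case: (e \in S); case: (f \in S); case: (g \in S);
  rewrite /= ?inE ?eqxx ?Hs //=;
  try (f_equal; apply/setP => x; rewrite !inE;
       by case: (x == e); case: (x == f); case: (x == g); case: (x \in S)).

Lemma Zb_lemmas (R : rcfType) (E : finType) (e f g : E)
  (hef : e != f) (heg : e != g) (hfg : f != g) (v : {set E} -> R) (y : E -> R) :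
  (forall a b c, Zb e f g a b c (mderiv e v) y = if a then 0 else Zb e f g true b c v y) /\
  (forall a b c, Zb e f g a b c (mderiv f v) y = if b then 0 else Zb e f g a true c v y) /\
  (forall a b c, Zb e f g a b c (mderiv g v) y = if c then 0 else Zb e f g a b true v y) /\
  (forall a b c, Zb e f g a b c (msetz e v) y = if a then 0 else Zb e f g a b c v y) /\
  (forall a b c, Zb e f g a b c (msetz f v) y = if b then 0 else Zb e f g a b c v y) /\
  (forall a b c, Zb e f g a b c (msetz g v) y = if c then 0 else Zb e f g a b c v y).
Proof.
have hfe : (f == e) = false by rewrite eq_sym; exact: negbTE hef.
have hge : (g == e) = false by rewrite eq_sym; exact: negbTE heg.
have hgf : (g == f) = false by rewrite eq_sym; exact: negbTE hfg.
have Hs := (negbTE hef, negbTE heg, negbTE hfg, hfe, hge, hgf).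
split; [|split; [|split; [|split; [|split]]]] => a b c;
  case: a; case: b; case: c; rewrite /Zb /=;
  (apply: eq_Zeval || (rewrite -[RHS](Zeval0 y); apply: eq_Zeval));
  crush e f g Hs.
Qed.

Lemma Zeval_expand (R : rcfType) (E : finType) (e f g : E)
  (hef : e != f) (heg : e != g) (hfg : f != g) (v : {set E} -> R) (y : E -> R) :
  Zeval v y = Zb e f g false false false v y + y e * Zb e f g true false false v y
   + y f * Zb e f g false true false v y + y g * Zb e f g false false true v y
   + y e * y f * Zb e f g true true false v y + y e * y g * Zb e f g true false true v y
   + y f * y g * Zb e f g false true true v y
   + y e * y f * y g * Zb e f g true true true v y.
Proof.
have hfe : (f == e) = false by rewrite eq_sym; exact: negbTE hef.
have hge : (g == e) = false by rewrite eq_sym; exact: negbTE heg.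
have hgf : (g == f) = false by rewrite eq_sym; exact: negbTE hfg.
have Hs := (negbTE hef, negbTE heg, negbTE hfg, hfe, hge, hgf).
rewrite (Zeval_dec v y e) (Zeval_dec (msetz e v) y f) (Zeval_dec (mderiv e v) y f).
rewrite (Zeval_dec (msetz f (msetz e v)) y g) (Zeval_dec (mderiv f (msetz e v)) y g).
rewrite (Zeval_dec (msetz f (mderiv e v)) y g) (Zeval_dec (mderiv f (mderiv e v)) y g).
rewrite /Zb.
rewrite (@eq_Zeval _ _ (msetz g (msetz f (msetz e v))) (Bc e f g false false false v));
  last by crush e f g Hs.
rewrite (@eq_Zeval _ _ (mderiv g (msetz f (msetz e v))) (Bc e f g false false true v));
  last by crush e f g Hs.
rewrite (@eq_Zeval _ _ (msetz g (mderiv f (msetz e v))) (Bc e f g false true false v));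
  last by crush e f g Hs.
rewrite (@eq_Zeval _ _ (mderiv g (mderiv f (msetz e v))) (Bc e f g false true true v));
  last by crush e f g Hs.
rewrite (@eq_Zeval _ _ (msetz g (msetz f (mderiv e v))) (Bc e f g true false false v));
  last by crush e f g Hs.
rewrite (@eq_Zeval _ _ (mderiv g (msetz f (mderiv e v))) (Bc e f g true false true v));
  last by crush e f g Hs.
rewrite (@eq_Zeval _ _ (msetz g (mderiv f (mderiv e v))) (Bc e f g true true false v));
  last by crush e f g Hs.
rewrite (@eq_Zeval _ _ (mderiv g (mderiv f (mderiv e v))) (Bc e f g true true true v));
  last by crush e f g Hs.
ring.
Qed.

Lemma Zb_indep (R : rcfType) (E : finType) (e f g : E) a b c
  (v : {set E} -> R) (y1 y2 : E -> R) :
  (forall i, i != e -> i != f -> i != g -> y1 i = y2 i) ->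
  Zb e f g a b c v y1 = Zb e f g a b c v y2.
Proof.
move=> h; rewrite /Zb /Zeval; apply: eq_bigr => S _.
rewrite /Bc; case hd: (_ && _ && _); last by rewrite !mul0r.
move/andP: hd => [/andP [he hf] hg]; congr (_ * _).
apply: eq_bigr => i hi; apply: h; apply/eqP => hie; subst i.
- by rewrite hi in he.
- by rewrite hi in hf.
- by rewrite hi in hg.
Qed.

Theorem proposition4p15 (R : rcfType) (E : finType) (w : {set E} -> R)
  (w_ge0 : forall S, 0 <= w S) (w_nz : exists S, w S != 0)
  (Hray : Rayleigh w) (e f g : E)
  (hef : e != f) (heg : e != g) (hfg : f != g)
  (y : E -> R) (hy : forall c, 0 < y c) :
  - 2 * Num.sqrt (DeltaZ (msetz g w) e f y * DeltaZ (mderiv g w) e f y)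
    <= ThetaZ w e f g y.
Proof.
have key : forall t, 0 < t -> 0 <= DeltaZ (msetz g w) e f y + t * ThetaZ w e f g y
                                  + t ^+ 2 * DeltaZ (mderiv g w) e f y.
  move=> t ht.
  pose y' := fun i => if i == g then t else y i.
  have hy' : forall c, 0 < y' c by move=> c; rewrite /y'; case: ifP.
  have := Hray e f y' hef hy'.
  suff -> : DeltaZ w e f y' = DeltaZ (msetz g w) e f y + t * ThetaZ w e f g y
                                  + t ^+ 2 * DeltaZ (mderiv g w) e f y by [].
  have L1 := fun v y => (Zb_lemmas hef heg hfg v y).1.
  have L2 := fun v y => (Zb_lemmas hef heg hfg v y).2.1.
  have L3 := fun v y => (Zb_lemmas hef heg hfg v y).2.2.1.
  have L4 := fun v y => (Zb_lemmas hef heg hfg v y).2.2.2.1.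
  have L5 := fun v y => (Zb_lemmas hef heg hfg v y).2.2.2.2.1.
  have L6 := fun v y => (Zb_lemmas hef heg hfg v y).2.2.2.2.2.
  have I : forall a b c, Zb e f g a b c w y' = Zb e f g a b c w y.
    move=> a b c; apply: Zb_indep => i _ _ hi; by rewrite /y' (negbTE hi).
  rewrite /DeltaZ /ThetaZ !(Zeval_expand hef heg hfg).
  do 3!rewrite ?L1 ?L2 ?L3 ?L4 ?L5 ?L6 /=.
  rewrite !I /y' eqxx (negbTE heg) (negbTE hfg).
  ring.
set D0 := DeltaZ (msetz g w) e f y in key *.
set D1 := DeltaZ (mderiv g w) e f y in key *.
set Th := ThetaZ w e f g y in key *.
have hs := sqrtr_ge0 (D0 * D1).
have [hT|hT] := leP 0 Th; first by nra.
have hD1 : 0 < D1.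
  rewrite ltNge; apply/negP => hD1.
  pose t := (`|D0| + 1) / (- Th).
  have ht : 0 < t by rewrite /t divr_gt0 // ?oppr_gt0 // ltr_wpDl.
  have htT : t * Th = - (`|D0| + 1) by rewrite /t; field; rewrite ?oppr_eq0 lt_eqF.
  have := key t ht; rewrite htT.
  have := ler_norm D0.
  have : t ^+ 2 * D1 <= 0 by rewrite mulr_ge0_le0 // sqr_ge0.
  lra.
pose t := - Th / (2 * D1).
have ht : 0 < t by rewrite /t divr_gt0 // ?oppr_gt0 // mulr_gt0.
have hq : (D0 + t * Th + t ^+ 2 * D1) * (4 * D1) = 4 * D0 * D1 - Th ^+ 2.
  by rewrite /t; field; rewrite (gt_eqF hD1).
have hq2 : 0 <= 4 * D0 * D1 - Th ^+ 2.
  by rewrite -hq; apply: mulr_ge0; [exact: key | lra].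
have hsq : Num.sqrt (D0 * D1) ^+ 2 = D0 * D1.
  by rewrite sqr_sqrtr //; nra.
nra.
Qed.
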